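(* Let $c=(c_0,c_1):[\omega_1]^2\to 3\times[\omega_1]^{<\omega}$ be a $T$-coloring and let $\alpha_0<\alpha_1<\alpha_2<\alpha_3<\beta_0<\beta_1<\beta_2<\beta_3<\omega_1$ satisfy: (1) $\{\alpha_1,\alpha_2\},\{\beta_1,\beta_2\}\in\mathcal{B}_c$; (2) $\{\alpha_2,\beta_1\}\in\mathcal{A}_c$; (3) $c(\{\alpha_1,\beta_2\})=(2,\emptyset)$; (4) $c(\{\alpha_1,\alpha_3\})=c(\{\alpha_0,\alpha_2\})=(2,\emptyset)$; (5) $c(\{\beta_1,\beta_3\})=c(\{\beta_0,\beta_2\})=(2,\emptyset)$; (6) $\alpha_1\notin c_1(\{\alpha_2,\beta_2\})$. Then $\|\mathfrak{1}_{\{\alpha_1,\alpha_2\}}\|_{\mathcal{A}_c}=\|\mathfrak{1}_{\{\beta_1,\beta_2\}}\|_{\mathcal{A}_c}=1$, $\nu_{\mathcal{D}_c}(\mathfrak{1}_{\{\alpha_1,\alpha_2\}})=\nu_{\mathcal{D}_c}(\mathfrak{1}_{\{\beta_1,\beta_2\}})=\sqrt2$, $\|\mathfrak{1}_{\{\alpha_1,\alpha_2\}}-\mathfrak{1}_{\{\beta_1,\beta_2\}}\|_{\mathcal{A}_c}=\sqrt2$ and $\nu_{\mathcal{D}_c}(\mathfrak{1}_{\{\alpha_1,\alpha_2\}}-\mathfrak{1}_{\{\beta_1,\beta_2\}})=\sqrt5$.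
   Context: $3=\{0,1,2\}$; $[\omega_1]^{<\omega}$ is the family of finite subsets of $\omega_1$ and $[X]^2$ the family of two-element subsets; $\mathfrak{1}_A$ is the characteristic function of $A$. A function $c=(c_0,c_1):[\omega_1]^2\to I\times J$ (with $0,1\in I$, $J\neq\emptyset$) is a $T$-coloring if for every uncountable pairwise disjoint family $\{\{a_\xi(0),a_\xi(1)\}:\xi<\omega_1\}$ of pairs of $\omega_1$ and all $(i_0,j_0),(i_1,j_1)\in I\times J$ there are $\xi<\eta<\omega_1$ with $c(\{a_\xi(0),a_\eta(0)\})=(i_0,j_0)$ and $c(\{a_\xi(1),a_\eta(1)\})=(i_1,j_1)$. Define $\mathcal{A}_c=\{a\in[\omega_1]^{<\omega}:c_0[[a]^2]\subseteq\{0\}\}$, $\mathcal{B}_c=\{a\in[\omega_1]^{<\omega}:c_0[[a]^2]\subseteq\{1\}\}$, and $\mathcal{D}_c$ as the collection of all sets $\{\{\xi_1,\eta_1\},\dots,\{\xi_k,\eta_k\}\}$ ($k\in\mathbb{N}$) of consecutive pairs with $\xi_i<\eta_i$ such that $c(\{\xi_i,\xi_j\})=c(\{\eta_i,\eta_j\})=(2,\{\xi_l,\eta_l:l<i\})$ for all $1\le i<j\le k$ (a set of consecutive pairs is a set $D$ of two-element subsets with $\max a<\min b$ or $\max b<\min a$ for distinct $a,b\in D$). For $x\in\mathbb{R}^{\omega_1}$: $\|x\|_{\mathcal{A}_c}=\sup_{A\in\mathcal{A}_c}\sqrt{\sum_{\alpha\in A}x(\alpha)^2}$ and $\nu_{\mathcal{D}_c}(x)=\sup_{D\in\mathcal{D}_c}\sqrt{\sum_{\{\alpha,\beta\}\in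 D}|x(\alpha)-x(\beta)|^2}$. *)

(* Defs.v *)
From HB Require Import structures.
From mathcomp Require Import all_boot all_order all_algebra.
From mathcomp Require Import all_classical all_reals ereal numfun.
Set Implicit Arguments. Unset Strict Implicit. Unset Printing Implicit Defensive.
Import Order.TTheory GRing.Theory Num.Theory.
Local Open Scope classical_set_scope.
Local Open Scope ring_scope.
Local Open Scope order_scope.

Section Defs.
Context {disp : Order.disp_t} (W : orderType disp).

Definition is_omega1 : Prop :=
  well_founded (fun x y : W => x < y) /\
  ~ countable [set: W] /\
  (forall w : W, countable [set v : W | v < w]).

(* A coloring c = (c0, c1) : [W]^2 -> 3 x [W]^{<omega}, given as two
   functions of two arguments; it is a coloring of unordered pairs when
   it is symmetric with c0 valued in {0,1,2} and c1 valued in finite sets. *)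
Definition is_coloring (c0 : W -> W -> nat) (c1 : W -> W -> set W) : Prop :=
  (forall a b, c0 a b = c0 b a) /\ (forall a b, c1 a b = c1 b a) /\
  (forall a b, a != b -> (c0 a b < 3)%N) /\
  (forall a b, a != b -> finite_set (c1 a b)).

Definition T_coloring (c0 : W -> W -> nat) (c1 : W -> W -> set W) : Prop :=
  forall a0 a1 : W -> W,
    (forall xi, a0 xi < a1 xi) ->
    (forall xi eta, xi != eta ->
       [/\ a0 xi != a0 eta, a0 xi != a1 eta, a1 xi != a0 eta & a1 xi != a1 eta]) ->
    forall (i0 i1 : nat) (j0 j1 : set W),
      (i0 < 3)%N -> (i1 < 3)%N -> finite_set j0 -> finite_set j1 ->
      exists xi eta, [/\ xi < eta,
        c0 (a0 xi) (a0 eta) = i0, c1 (a0 xi) (a0 eta) = j0,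
        c0 (a1 xi) (a1 eta) = i1 & c1 (a1 xi) (a1 eta) = j1].

Definition A_c (c0 : W -> W -> nat) (a : set W) : Prop :=
  finite_set a /\ (forall x y, a x -> a y -> x != y -> c0 x y = 0%N).

Definition B_c (c0 : W -> W -> nat) (a : set W) : Prop :=
  finite_set a /\ (forall x y, a x -> a y -> x != y -> c0 x y = 1%N).

(* D_c: a set {{xi_1,eta_1},...,{xi_k,eta_k}} of consecutive pairs, listed
   in increasing order xi_1 < eta_1 < xi_2 < eta_2 < ... < xi_k < eta_k,
   represented by the sequence s of pairs (xi_i, eta_i). *)
Definition D_c (c0 : W -> W -> nat) (c1 : W -> W -> set W)
    (s : seq (W * W)) : Prop :=
  (forall p, p \in s -> p.1 < p.2) /\
  sorted (fun p q : W * W => p.2 < q.1) s /\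
  (forall p : W * W, forall i j : nat, (i < j)%N -> (j < size s)%N ->
     let lower := [set w : W | exists l : nat, (l < i)%N /\
                     (w = (nth p s l).1 \/ w = (nth p s l).2)] in
     [/\ c0 (nth p s i).1 (nth p s j).1 = 2%N,
         c1 (nth p s i).1 (nth p s j).1 = lower,
         c0 (nth p s i).2 (nth p s j).2 = 2%N &
         c1 (nth p s i).2 (nth p s j).2 = lower]).

Variable R : realType.

Definition normA (c0 : W -> W -> nat) (x : W -> R) : \bar R :=
  ereal_sup [set (Num.sqrt (\sum_(a \in A) x a ^+ 2))%:E | A in A_c c0].

Definition nuD (c0 : W -> W -> nat) (c1 : W -> W -> set W) (x : W -> R)
    : \bar R :=
  ereal_sup [set (Num.sqrt (\sum_(p <- s) `|x p.1 - x p.2| ^+ 2))%:E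
            | s in D_c c0 c1].

End Defs.

(* Main.v *)
Require Import Defs.
From HB Require Import structures.
From mathcomp Require Import all_boot all_order all_algebra.
From mathcomp Require Import all_classical all_reals ereal numfun.
From mathcomp Require Import lra zify.
Import Order.TTheory GRing.Theory Num.Theory.
Local Open Scope classical_set_scope.
Local Open Scope ring_scope.
Section H.
Context {disp : Order.disp_t} (W : orderType disp) (R : realType).

Lemma in_set2b (u v e : W) : (e \in [set u; v]) = (e == u) || (e == v).
Proof. apply/idP/orP => [/set_mem [->|->] | [/eqP->|/eqP->]]; rewrite ?eqxx ?orbT; auto; apply/mem_set; by [left|right]. Qed.

Lemma bb (a b : bool) : `|a%:R - b%:R|^+2 <= (a + b)%N%:R :> R.
Proof. by case: a; case: b; rewrite /= ?subrr ?subr0 ?sub0r ?normrN ?normr1 ?normr0 ?expr1n ?expr0n. Qed.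
Lemma sqb (b : bool) : (b%:R)^+2 = b%:R :> R.
Proof. by case: b; rewrite ?expr1n ?expr0n. Qed.
Lemma sup_eq (S : set (\bar R)) (r : R) : S r%:E -> (forall y, S y -> (y <= r%:E)%E) ->
  ereal_sup S = r%:E.
Proof.
move=> Sr ub; apply/le_anti/andP; split; first exact/ereal_supP.
by apply: le_ereal_sup_tmp; exists r%:E.
Qed.
Lemma seq_count (t : seq W) (P : pred W) :
  \sum_(a <- t) (P a)%:R = (count P t)%:R :> R.
Proof.
elim: t => [|a t IH]; rewrite ?big_nil ?big_cons //= IH.
by rewrite natrD.
Qed.
Lemma cnt1 (t : seq W) u : uniq t -> count (fun e => e == u) t = (u \in t).
Proof. by move=> U; rewrite -(count_uniq_mem u U). Qed.
Lemma countU (P Q : pred W) t : (count (fun e => P e || Q e) t <= count P t + count Q t)%N.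
Proof. by rewrite -(count_predUI P Q) leq_addr. Qed.
Lemma cnt2 (t : seq W) u v : uniq t ->
  (count (fun e => (e == u) || (e == v)) t <= (u \in t) + (v \in t))%N.
Proof.
move=> U; apply: leq_trans (countU (fun e => e == u) (fun e => e == v) t) _.
by rewrite !cnt1.
Qed.
Lemma cnt2' (t : seq W) u v : uniq t ->
  (count (fun e => (e == u) || (e == v)) t <= 2)%N.
Proof.
move=> U; apply: leq_trans (cnt2 _ u v U) _.
by case: (u \in t); case: (v \in t).
Qed.

Lemma normA_pair c0 (u v : W) : u != v -> c0 u v = 1%N ->
  normA c0 (\1_[set u; v] : W -> R) = 1%:E.
Proof.
move=> nuv cuv; apply: sup_eq.
  exists [set u]; first by split => // x y -> ->; rewrite eqxx.
  by rewrite fsbig_set1 indicE in_set2b eqxx /= expr1n sqrtr1.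
move=> _ [A [fA HA] <-]; rewrite lee_fin -sqrtr1; apply: ler_wsqrtr.
rewrite (eq_fsbigr (fun a => ((a == u) || (a == v))%:R)); last first.
  by move=> a _; rewrite indicE in_set2b sqb.
rewrite fsbig_finite // seq_count.
have U := finmap.fset_uniq (fset_set A).
rewrite lern1; apply: leq_trans (cnt2 _ u v U) _.
have memA : forall e, e \in finmap.enum_fset (fset_set A) -> A e.
  by move=> e h; apply: set_mem; rewrite -(in_fset_set fA).
case Eu: (u \in _); case Ev: (v \in _) => //=.
have := HA u v (memA _ Eu) (memA _ Ev) nuv; by rewrite cuv.
Qed.
Local Open Scope order_scope.
Fixpoint flat (s : seq (W * W)) : seq W :=
  if s is q :: s' then q.1 :: q.2 :: flat s' else [::].
Definition Rp := fun p q : W * W => p.2 < q.1.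

Lemma flat_cat s1 s2 : flat (s1 ++ s2) = flat s1 ++ flat s2.
Proof. by elim: s1 => //= q s1 ->. Qed.

Lemma mem_flat q s : q \in s -> (q.1 \in flat s) && (q.2 \in flat s).
Proof.
elim: s => //= r s IH; rewrite in_cons => /orP[/eqP->|/IH/andP[h1 h2]].
  by rewrite !in_cons !eqxx !orbT.
by rewrite !in_cons h1 h2 !orbT.
Qed.

Lemma path_flat q s : (forall p, p \in q :: s -> p.1 < p.2) -> path Rp q s ->
  forall e, e \in flat s -> q.2 < e.
Proof.
elim: s q => //= r s IH q H /andP[qr pr] e.
have Hr : r.1 < r.2 by apply: H; rewrite !in_cons eqxx orbT.
rewrite !in_cons => /orP[/eqP->//|/orP[/eqP->|es]].
  exact: lt_trans qr Hr.
have h : r.2 < e := IH r (fun p hp => H p (@mem_behead _ (q :: r :: s) p hp)) pr e es.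
by apply: lt_trans (lt_trans qr Hr) h.
Qed.

Lemma flat_uniq s : (forall p, p \in s -> p.1 < p.2) -> sorted Rp s -> uniq (flat s).
Proof.
elim: s => //= q s IH H P.
have Hq : q.1 < q.2 by apply: H; rewrite in_cons eqxx.
have G := @path_flat q s H P.
rewrite in_cons negb_or IH //; last 2 first.
- by move=> p hp; apply: H; rewrite in_cons hp orbT.
- exact: path_sorted P.
rewrite lt_eqF //= andbT; apply/andP; split; apply/negP => /G h.
- by have := lt_trans Hq h; rewrite ltxx.
- by rewrite ltxx in h.
Qed.

Lemma flat_before s1 p s2 : (forall q, q \in s1 ++ p :: s2 -> q.1 < q.2) ->
  sorted Rp (s1 ++ p :: s2) -> forall e, e \in flat s1 -> e < p.1.
Proof.
elim: s1 => //= r s1 IH H P e.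
have Hr : r.1 < r.2 by apply: H; rewrite in_cons eqxx.
have rp : r.2 < p.1.
  apply: (@path_flat r _ H P); rewrite flat_cat mem_cat /= in_cons eqxx orbT //.
rewrite !in_cons => /orP[/eqP->|/orP[/eqP->//|es]].
  exact: lt_trans Hr rp.
apply: IH es; last exact: path_sorted P.
by move=> q hq; apply: H; rewrite in_cons hq orbT.
Qed.

Lemma flat_nth d s e : e \in flat s ->
  exists j, (j < size s)%N /\ (e = (nth d s j).1 \/ e = (nth d s j).2).
Proof.
elim: s => //= q s IH; rewrite !in_cons => /orP[/eqP->|/orP[/eqP->|/IH[j [hj he]]]].
- by exists 0%N; split => //; left.
- by exists 0%N; split => //; right.
- by exists j.+1.
Qed.


Lemma sum_flat (P : pred W) s :
  (\sum_(q <- s) (P q.1 + P q.2) = count P (flat s))%N.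
Proof. elim: s => [|q s IH]; rewrite ?big_nil ?big_cons //= IH; lia. Qed.
Lemma sum_bound (g : W * W -> R) (P : pred W) s :
  (forall q, q \in s -> (g q <= (P q.1 + P q.2)%N%:R)%R) ->
  (\sum_(q <- s) g q <= (count P (flat s))%:R)%R.
Proof.
move=> H; rewrite -sum_flat natr_sum big_seq [X in (_ <= X)%R]big_seq.
exact: ler_sum.
Qed.

Lemma D2 c0 c1 (u1 v1 u2 v2 : W) : u1 < v1 -> v1 < u2 -> u2 < v2 ->
  c0 u1 u2 = 2%N -> c1 u1 u2 = set0 -> c0 v1 v2 = 2%N -> c1 v1 v2 = set0 ->
  D_c c0 c1 [:: (u1, v1); (u2, v2)].
Proof.
move=> h1 h2 h3 e1 f1 e2 f2; split.
  by move=> p; rewrite !in_cons orbF => /orP[/eqP->|/eqP->].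
split; first by rewrite /= andbT.
move=> d i j hij hj; rewrite /= in hj.
move: i j hij hj => [|[|i]] [|[|[|j]]] // _ _.
rewrite /=; split => //; [rewrite f1 | rewrite f2];
  apply/seteqP; split => w //=; by case=> l [].
Qed.

Lemma nuD_pair c0 c1 (u0 u v v3 : W) : u0 < u -> u < v -> v < v3 ->
  c0 u0 v = 2%N -> c1 u0 v = set0 -> c0 u v3 = 2%N -> c1 u v3 = set0 ->
  nuD c0 c1 (\1_[set u; v] : W -> R) = (Num.sqrt 2)%:E.
Proof.
move=> h1 h2 h3 e1 f1 e2 f2; apply: sup_eq.
  exists [:: (u0, u); (v, v3)]; first exact: D2.
  rewrite !big_cons big_nil /= !indicE !in_set2b !eqxx (lt_eqF h1) (lt_eqF (lt_trans h1 h2)).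
  rewrite (gt_eqF h2) (gt_eqF h3) (gt_eqF (lt_trans h2 h3)) /=.
  congr (_%:E); congr Num.sqrt.
  rewrite real_normK ?num_real // real_normK ?num_real //. lra.
move=> _ [s [Hp [Hs _]] <-]; rewrite lee_fin; apply: ler_wsqrtr.
apply: le_trans (sum_bound _ (fun e => (e == u) || (e == v)) s _) _.
  by move=> q _; rewrite !indicE !in_set2b; apply: bb.
rewrite ler_nat; exact: cnt2' _ _ _ (flat_uniq _ Hp Hs).
Qed.

Lemma ltW_neq (x y : W) : x < y -> x != y.
Proof. by move=> h; rewrite lt_eqF. Qed.
Lemma bb4 (x1 y1 x2 y2 : bool) : ~~ (x1 && y1) -> ~~ (x2 && y2) -> ~~ (x1 && y2) -> ~~ (y1 && x2) ->
  (`|(x1%:R - y1%:R) - (x2%:R - y2%:R)|^+2 <= ((x1 || y1) + (x2 || y2))%N%:R :> R)%R.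
Proof.
rewrite real_normK ?num_real //.
by case: x1; case: y1; case: x2; case: y2 => //= _ _ _ _; lra.
Qed.
Lemma bbany (x1 y1 x2 y2 : bool) : ~~ (x1 && y1) -> ~~ (x2 && y2) ->
  (`|(x1%:R - y1%:R) - (x2%:R - y2%:R)|^+2 <= 4 :> R)%R.
Proof.
rewrite real_normK ?num_real //.
by case: x1; case: y1; case: x2; case: y2 => //= _ _; lra.
Qed.
Lemma sorted_after s1 (p : W * W) s2 : sorted Rp (s1 ++ p :: s2) -> path Rp p s2.
Proof.
case: s1 => [|r s1] //=; rewrite cat_path => /andP[_ /= /andP[_ ->]] //.
Qed.
End H.
Arguments flat {disp W} s.


Theorem lemma3p3 (disp : Order.disp_t) (W : orderType disp) (R : realType)
  (c0 : W -> W -> nat) (c1 : W -> W -> set W)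
  (a0 a1 a2 a3 b0 b1 b2 b3 : W) :
  is_omega1 W ->
  is_coloring c0 c1 -> T_coloring c0 c1 ->
  (a0 < a1)%O -> (a1 < a2)%O -> (a2 < a3)%O -> (a3 < b0)%O ->
  (b0 < b1)%O -> (b1 < b2)%O -> (b2 < b3)%O ->
  B_c c0 [set a1; a2] -> B_c c0 [set b1; b2] ->
  A_c c0 [set a2; b1] ->
  (c0 a1 b2 = 2%N /\ c1 a1 b2 = set0) ->
  (c0 a1 a3 = 2%N /\ c1 a1 a3 = set0) -> (c0 a0 a2 = 2%N /\ c1 a0 a2 = set0) ->
  (c0 b1 b3 = 2%N /\ c1 b1 b3 = set0) -> (c0 b0 b2 = 2%N /\ c1 b0 b2 = set0) ->
  ~ c1 a2 b2 a1 ->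
  normA c0 (\1_[set a1; a2] : W -> R) = 1%:E /\
      normA c0 (\1_[set b1; b2] : W -> R) = 1%:E /\
      nuD c0 c1 (\1_[set a1; a2] : W -> R) = (Num.sqrt 2)%:E /\
      nuD c0 c1 (\1_[set b1; b2] : W -> R) = (Num.sqrt 2)%:E /\
      normA c0 (\1_[set a1; a2] - \1_[set b1; b2] : W -> R) = (Num.sqrt 2)%:E /\
    nuD c0 c1 (\1_[set a1; a2] - \1_[set b1; b2] : W -> R) = (Num.sqrt 5)%:E.
Proof.
move=> _ _ _ h01 h12 h23 h3b hb01 hb12 hb23 [_ Ba] [_ Bb] [_ Aab]
  [c12 c12'] [a13 a13'] [a02 a02'] [b13 b13'] [b02 b02'] nc.
have a2b0 : (a2 < b0)%O := lt_trans h23 h3b.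
have a2b1 : (a2 < b1)%O := lt_trans a2b0 hb01.
have a2b2 : (a2 < b2)%O := lt_trans a2b1 hb12.
have a2b3 : (a2 < b3)%O := lt_trans a2b2 hb23.
have a1b1 : (a1 < b1)%O := lt_trans h12 a2b1.
have a1b2 : (a1 < b2)%O := lt_trans h12 a2b2.
have a1b3 : (a1 < b3)%O := lt_trans h12 a2b3.
have b1b3 : (b1 < b3)%O := lt_trans hb12 hb23.
have Ba12 : c0 a1 a2 = 1%N by apply: Ba; [left|right|rewrite lt_eqF].
have Bb12 : c0 b1 b2 = 1%N by apply: Bb; [left|right|rewrite lt_eqF].
split; first by apply: normA_pair => //; rewrite lt_eqF.
split; first by apply: normA_pair => //; rewrite lt_eqF.
split; first exact: (@nuD_pair _ W R c0 c1 _ _ _ _ h01 h12 h23 a02 a02' a13 a13').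
split; first exact: (@nuD_pair _ W R c0 c1 _ _ _ _ hb01 hb12 hb23 b02 b02' b13 b13').
pose PA e := (e == a1) || (e == a2).
pose PB e := (e == b1) || (e == b2).
have xME : forall e, (\1_[set a1; a2] - \1_[set b1; b2] : W -> R) e = (PA e)%:R - (PB e)%:R.
  move=> e; rewrite (_ : (\1_[set a1; a2] - \1_[set b1; b2] : W -> R) e = \1_[set a1; a2] e - \1_[set b1; b2] e) // !indicE !in_set2b //.
have nAB : forall e, ~~ (PA e && PB e).
  move=> e; rewrite /PA /PB; apply/negP => /andP[/orP[/eqP->|/eqP->]].
    by rewrite (lt_eqF a1b1) (lt_eqF a1b2).
  by rewrite (lt_eqF a2b1) (lt_eqF a2b2).
split.
  apply: sup_eq.
    exists [set a2; b1]; first by split.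
    rewrite fsbigU0 //; last by move=> w [-> h]; move: a2b1; rewrite h ltxx.
    rewrite !fsbig_set1 !xME /PA /PB !eqxx (gt_eqF h12) (lt_eqF a2b1) (lt_eqF a2b2).
    rewrite (gt_eqF a1b1) (gt_eqF a2b1) (lt_eqF hb12) /=.
    congr (_%:E); congr Num.sqrt; lra.
  move=> _ [A [fA HA] <-]; rewrite lee_fin; apply: ler_wsqrtr.
  rewrite (eq_fsbigr (fun a => (PA a || PB a)%:R)); last first.
    move=> a _; rewrite xME; move: (nAB a); case: (PA a); case: (PB a) => //= _; lra.
  rewrite fsbig_finite // seq_count ler_nat.
  have U := finmap.fset_uniq (fset_set A).
  have memA : forall e, e \in finmap.enum_fset (fset_set A) -> A e.
    by move=> e h; apply: set_mem; rewrite -(in_fset_set fA).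
  apply: leq_trans (countU _ PA PB _) _.
  have C1 := cnt2 _ _ a1 a2 U; have C2 := cnt2 _ _ b1 b2 U.
  have N1 : ~~ ((a1 \in finmap.enum_fset (fset_set A)) && (a2 \in finmap.enum_fset (fset_set A))).
    apply/negP => /andP[E1 E2].
    have := HA a1 a2 (memA _ E1) (memA _ E2) (negbT (lt_eqF h12)); by rewrite Ba12.
  have N2 : ~~ ((b1 \in finmap.enum_fset (fset_set A)) && (b2 \in finmap.enum_fset (fset_set A))).
    apply/negP => /andP[E1 E2].
    have := HA b1 b2 (memA _ E1) (memA _ E2) (negbT (lt_eqF hb12)); by rewrite Bb12.
  have K1 : (count PA (finmap.enum_fset (fset_set A)) <= 1)%N.
    apply: leq_trans C1 _; move: N1.
    by case: (a1 \in finmap.enum_fset (fset_set A)); case: (a2 \in finmap.enum_fset (fset_set A)).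
  have K2 : (count PB (finmap.enum_fset (fset_set A)) <= 1)%N.
    apply: leq_trans C2 _; move: N2.
    by case: (b1 \in finmap.enum_fset (fset_set A)); case: (b2 \in finmap.enum_fset (fset_set A)).
  exact: leq_add K1 K2.
apply: sup_eq.
  exists [:: (a1, b1); (b2, b3)].
    exact: (@D2 _ W c0 c1 _ _ _ _ a1b1 hb12 hb23 c12 c12' b13 b13').
  rewrite !big_cons big_nil /= !xME /PA /PB !eqxx ?(lt_eqF a1b1) ?(lt_eqF a1b2) ?(gt_eqF h12).
  rewrite ?(gt_eqF a1b1) ?(gt_eqF a2b1) ?(gt_eqF a1b2) ?(gt_eqF a2b2) ?(gt_eqF hb12).
  rewrite ?(gt_eqF a1b3) ?(gt_eqF a2b3) ?(gt_eqF b1b3) ?(gt_eqF hb23) ?(lt_eqF hb12) /=.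
  congr (_%:E); congr Num.sqrt.
  rewrite real_normK ?num_real // real_normK ?num_real //. lra.
move=> _ [s [Hp [Hs Hc]] <-]; rewrite lee_fin; apply: ler_wsqrtr.
rewrite (eq_bigr (fun q => `|((PA q.1)%:R - (PB q.1)%:R) - ((PA q.2)%:R - (PB q.2)%:R)|^+2)); last first.
  by move=> q _; rewrite !xME.
have U := flat_uniq _ _ Hp Hs.
case: (boolP (has (fun q => PA q.1 && PB q.2) s)) => [/hasP[p ps /andP[pA pB]] | /hasPn noab].
  move: Hp Hs Hc U; case/splitPr: ps => s1 s2 Hp Hs Hc U.
  rewrite big_cat big_cons /=.
  have Hp' : forall q, q \in p :: s2 -> (q.1 < q.2)%O.
    by move=> q hq; apply: Hp; rewrite mem_cat hq orbT.
  have after : forall e, e \in flat s2 -> (p.2 < e)%O :=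
    @path_flat _ W p s2 Hp' (sorted_after _ _ _ _ Hs).
  have before : forall e, e \in flat s1 -> (e < p.1)%O := @flat_before _ W s1 p s2 Hp Hs.
  have pa2 : (p.1 <= a2)%O by case/orP: pA => /eqP->; rewrite ?lexx ?(ltW h12).
  have pb1 : (b1 <= p.2)%O by case/orP: pB => /eqP->; rewrite ?lexx ?(ltW hb12).
  move: U; rewrite flat_cat cat_uniq => /and3P[U1 _ /= /and3P[_ _ U2]].
  have L1 : \sum_(q <- s1) `|((PA q.1)%:R - (PB q.1)%:R) - ((PA q.2)%:R - (PB q.2)%:R)|^+2
      <= ((a1 \in flat s1) : nat)%:R :> R.
    rewrite -(cnt1 _ _ _ U1).
    apply: (@sum_bound _ W R _ (fun e => e == a1) s1) => q qs.
    have /andP[m1 m2] := mem_flat _ _ _ qs.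
    have lowE : forall e, (e < p.1)%O -> PA e = (e == a1) /\ PB e = false.
      move=> e he; have ea2 : (e < a2)%O := lt_le_trans he pa2.
      by rewrite /PA /PB (lt_eqF ea2) (lt_eqF (lt_trans ea2 a2b1)) (lt_eqF (lt_trans ea2 a2b2)) orbF.
    case: (lowE _ (before _ m1)) (lowE _ (before _ m2)) => -> -> [-> ->].
    have := bb4 R (q.1 == a1) false (q.2 == a1) false; rewrite !andbF !orbF; apply => //.
  have L2 : \sum_(q <- s2) `|((PA q.1)%:R - (PB q.1)%:R) - ((PA q.2)%:R - (PB q.2)%:R)|^+2
      <= ((b2 \in flat s2) : nat)%:R :> R.
    rewrite -(cnt1 _ _ _ U2).
    apply: (@sum_bound _ W R _ (fun e => e == b2) s2) => q qs.
    have /andP[m1 m2] := mem_flat _ _ _ qs.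
    have highE : forall e, (p.2 < e)%O -> PA e = false /\ PB e = (e == b2).
      move=> e he; have eb1 : (b1 < e)%O := le_lt_trans pb1 he.
      by rewrite /PA /PB (gt_eqF eb1) (gt_eqF (lt_trans a2b1 eb1)) (gt_eqF (lt_trans a1b1 eb1)).
    case: (highE _ (after _ m1)) (highE _ (after _ m2)) => -> -> [-> ->].
    have := bb4 R false (q.1 == b2) false (q.2 == b2); rewrite /= !andbF; apply => //.
  have Lp := bbany R (PA p.1) (PB p.1) (PA p.2) (PB p.2) (nAB _) (nAB _).
  have X : ~~ ((a1 \in flat s1) && (b2 \in flat s2)).
    apply/negP => /andP[i1 i2].
    have pa : p.1 = a2.
      move: (before _ i1); case/orP: pA => /eqP-> //; by rewrite ltxx.
    have pb : p.2 = b1.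
      move: (after _ i2); case/orP: pB => /eqP-> //; by rewrite ltxx.
    have [j [hj hb]] := @flat_nth _ W p s2 b2 i2.
    have [l [hl ha]] := @flat_nth _ W p s1 a1 i1.
    have hsz : (size s1 + j.+1 < size (s1 ++ p :: s2))%N.
      by rewrite size_cat /= ltn_add2l ltnS.
    have hij : (size s1 < size s1 + j.+1)%N by rewrite -{1}[size s1]addn0 ltn_add2l.
    have := Hc p (size s1) (size s1 + j.+1) hij hsz.
    rewrite /= !nth_cat ltnn subnn (ltnNge (size s1 + j.+1)) leq_addr addKn /=.
    case=> _ c1E c0E _.
    case: hb => hb.
      rewrite pa -hb in c1E; apply: nc; rewrite c1E; exists l; split => //.
      by rewrite nth_cat hl.
    by rewrite pb -hb Bb12 in c0E.
  apply: le_trans (lerD L1 (lerD Lp L2)) _.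
  move: X; case: (a1 \in flat s1); case: (b2 \in flat s2) => //= _; lra.
apply: le_trans (@sum_bound _ W R _ (fun e => PA e || PB e) s _) _.
  move=> q qs; apply: bb4; [exact: nAB | exact: nAB | exact: noab |].
  have := Hp q qs; rewrite /PA /PB.
  apply: contraL => /andP[/orP[/eqP->|/eqP->] /orP[/eqP->|/eqP->]];
    by rewrite ?(lt_gtF a1b1) ?(lt_gtF a1b2) ?(lt_gtF a2b1) ?(lt_gtF a2b2).
rewrite ler_nat; apply: leq_trans (countU _ PA PB _) _.
exact: leq_trans (leq_add (cnt2' _ _ a1 a2 U) (cnt2' _ _ b1 b2 U)) _.
Qed.
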